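(* Let $m\ge 3$ be an integer and let $n=2^m-1$. Let $\phi\in\mathbb{R}$ with binary expansion $\phi=2\pi\times 0.b_0b_1b_2\ldots$ (i.e. $\phi=\sum_{k\ge 0} b_k\,2\pi/2^{k+1}$, $b_k\in\{0,1\}$), and set $\phi_m=2^{m-1}\phi$ (so that, modulo $2\pi$, $\phi_m=2\pi\times 0.b_{m-1}b_mb_{m+1}\ldots$). Let $\alpha|0_L\rangle+\beta|1_L\rangle$ be any logical state of the code $\mathrm{QRM}(1,m)$. Apply $R_z(-\phi)$ transversally, i.e. apply $R_z(-\phi)^{\otimes n}$, and postselect on all stabilizer syndrome measurements ($X$-type and $Z$-type) giving the accepting outcome $+1$, i.e. apply the code-space projector $P_{+1}$. Then the resulting state is, up to normalization and a global phase, the logical state obtained by a logical rotation by the angle $$\phi'=\phi-2\arctan\left(\frac{\sin(\phi_m)}{(2^m-1)+\cos(\phi_m)}\right)$$ about the $Z$ axis, namely $\alpha|0_L\rangle+e^{i\phi'}\beta|1_L\rangle$.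
   Context: $Z=|0\rangle\langle0|-|1\rangle\langle1|$ and $R_z(\theta)=\exp(-i\theta Z/2)$. Classical first-order Reed–Muller code $\mathrm{RM}(1,m)$: binary code of length $2^m$ whose codewords are the truth tables (value lists over all $x\in\{0,1\}^m$) of affine Boolean functions $a_0+a_1x_1+\dots+a_mx_m$. The shortened code $\overline{\mathrm{RM}}(1,m)$ is obtained by keeping the codewords of $\mathrm{RM}(1,m)$ whose first coordinate (the value at $x=0$) is $0$ and deleting that coordinate; it has length $2^m-1$, one codeword of weight $0$ and $2^m-1$ codewords of weight $2^{m-1}$. The punctured code $\mathrm{RM}^*(1,m)$ is the code of length $2^m-1$ generated by $\overline{\mathrm{RM}}(1,m)$ together with the all-ones vector $\mathbf{1}$. The quantum Reed–Muller code $\mathrm{QRM}(1,m)$ is the CSS code on $n=2^m-1$ qubits with logical basis states $|x_L\rangle\propto\sum_{y\in\overline{\mathrm{RM}}(1,m)}|y+x\mathbf{1}\rangle$ for $x\in\{0,1\}$ (addition mod 2). Its $X$-type stabilizer generators $S^X_1,\dots,S^X_m$ are $X^{g_i}=\bigotimes_k X^{(g_i)_k}$ for a basis $g_1,\dots,g_m$ of $\overline{\mathrm{RM}}(1,m)$; its $Z$-type stabilizer generators $S^Z_1,\dots,S^Z_{2^m-m-2}$ are $Z^{h}$ for the rows $h$ of a parity-check matrix of $\mathrm{RM}^*(1,m)$. The code-space projector is $P_{+1}=\prod_{i}\frac{I+S^Z_i}{2}\prod_{i=1}^m\frac{I+S^X_i}{2}$. *)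

(* Defs.v *)
From mathcomp Require Import all_boot all_order all_algebra.
From mathcomp Require Import all_classical all_reals all_analysis.
From mathcomp Require Export complex.
Set Implicit Arguments. Unset Strict Implicit. Unset Printing Implicit Defensive.
Import GRing.Theory Num.Theory.
Local Open Scope ring_scope.

Definition nq (m : nat) : nat := (2 ^ m).-1.

Lemma succ_ord_proof m (k : 'I_(nq m)) : (k.+1 < 2 ^ m)%N.
Proof.
have h := ltn_ord k. rewrite /nq in h.
have h2 : (0 < 2 ^ m)%N by rewrite expn_gt0.
by rewrite -(prednK h2) ltnS.
Qed.

(* coordinate x = 0 of {0,1}^m, and the coordinate k+1 (k : 'I_n) *)
Definition ord_zero m : 'I_(2 ^ m) := Ordinal (expn_gt0 2 m).
Definition succ_ord m (k : 'I_(nq m)) : 'I_(2 ^ m) := Ordinal (succ_ord_proof k).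

(* i-th binary digit of the index j : the point x in {0,1}^m labelled by j *)
Definition bit_of m (j : 'I_(2 ^ m)) (i : 'I_m) : 'F_2 := (odd (j %/ 2 ^ i))%:R.

(* RM(1,m): truth tables (over all x in {0,1}^m) of affine Boolean functions
   a0 + a_1 x_1 + ... + a_m x_m *)
Definition RM1 (m : nat) : {set 'rV['F_2]_(2 ^ m)} :=
  [set \row_j (a0 + \sum_(i < m) a 0 i * bit_of j i) | a0 : 'F_2, a : 'rV['F_2]_m].

Definition RMbar (m : nat) : {set 'rV['F_2]_(nq m)} :=
  [set \row_k (c 0 (succ_ord k)) | c : 'rV['F_2]_(2 ^ m) in RM1 m & c 0 (ord_zero m) == 0].

(* punctured code RM*(1,m): generated by RMbar(1,m) and the all-ones vector
   (RMbar is a linear code, so its span with 1 is {y + b 1}) *)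
Definition RMstar (m : nat) : {set 'rV['F_2]_(nq m)} :=
  [set y + b *: const_mx 1 | y in RMbar m, b in [set: 'F_2]].

Definition is_basis_of (k n : nat) (g : 'M['F_2]_(k, n)) (C : {set 'rV['F_2]_n}) :=
  row_free g /\ forall v : 'rV['F_2]_n, (v \in C) = (v <= g)%MS.

Definition is_parity_check (r n : nat) (H : 'M['F_2]_(r, n)) (C : {set 'rV['F_2]_n}) :=
  row_free H /\ forall v : 'rV['F_2]_n, (v \in C) = (H *m v^T == 0).

(* n-qubit states: amplitudes indexed by computational basis strings z in F_2^n *)
Definition qstate (R : rcfType) (n : nat) := 'rV['F_2]_n -> R[i].

Definition expi (R : realType) (t : R) : R[i] := (cos t +i* sin t)%C.

Definition Xop (R : rcfType) n (g : 'rV['F_2]_n) (psi : qstate R n) : qstate R n :=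
  fun z => psi (z + g).
Definition Zop (R : rcfType) n (h : 'rV['F_2]_n) (psi : qstate R n) : qstate R n :=
  fun z => (if (h *m z^T) 0 0 == 0 then 1 else -1) * psi z.

Definition halfop (R : rcfType) n (S : qstate R n -> qstate R n) (psi : qstate R n)
  : qstate R n := fun z => (psi z + S psi z) / 2%:R.

Definition codeproj (R : rcfType) m r (g : 'M['F_2]_(m, nq m)) (H : 'M['F_2]_(r, nq m))
  (psi : qstate R (nq m)) : qstate R (nq m) :=
  foldr (fun i acc => halfop (Zop (row i H)) acc)
    (foldr (fun i acc => halfop (Xop (row i g)) acc) psi (enum 'I_m))
    (enum 'I_r).

(* R_z(t) = exp(-i t Z / 2) = diag(e^{-it/2}, e^{it/2}), applied transversally *)
Definition Rz1 (R : realType) (t : R) (b : 'F_2) : R[i] :=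
  if b == 0 then expi (- t / 2) else expi (t / 2).
Definition Rz_transversal (R : realType) n (t : R) (psi : qstate R n) : qstate R n :=
  fun z => (\prod_(k < n) Rz1 t (z 0 k)) * psi z.

(* logical basis states (unnormalized; both have the same norm) *)
Definition ket0L (R : rcfType) m : qstate R (nq m) :=
  fun z => if z \in RMbar m then 1 else 0.
Definition ket1L (R : rcfType) m : qstate R (nq m) :=
  fun z => if z + const_mx 1 \in RMbar m then 1 else 0.

(* Main.v *)
Require Import Defs.
From mathcomp Require Import all_boot all_order all_algebra.
From mathcomp Require Import all_classical all_reals all_analysis.
From mathcomp Require Import complex.
From mathcomp Require Import ring lra zify.
Import GRing.Theory Num.Theory.
Import numFieldNormedType.Exports.
Local Open Scope classical_set_scope.
Local Open Scope ring_scope.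
Import Order.TTheory.

Section S.
Variable R : realType.
Lemma expiD (a b : R) : expi (a + b) = expi a * expi b.
Proof. rewrite /expi cosD sinD; apply/eqP; rewrite eq_complex /=. apply/andP; split; apply/eqP; ring. Qed.
Lemma expi0 : expi (0 : R) = 1.
Proof. by rewrite /expi cos0 sin0. Qed.
Lemma expiNK (a : R) : expi (- a) * expi a = 1.
Proof. by rewrite -expiD addNr expi0. Qed.
Lemma expi_neq0 (a : R) : expi a != 0.
Proof. apply/negP => /eqP h. have := expiNK a. rewrite h mulr0 => /eqP. by rewrite eq_sym oner_eq0. Qed.
Lemma prod_expi n (f : 'I_n -> R) : \prod_(k < n) expi (f k) = expi (\sum_(k < n) f k).
Proof.
elim: n f => [|n IH] f; first by rewrite !big_ord0 expi0.
by rewrite big_ord_recr big_ord_recr /= IH expiD.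
Qed.
Lemma key_atan (t N : R) (hN : 1 < N) :
  expi (- (2 * atan (sin t / (N + cos t)))) * ((N%:C)%C + expi t) = (N%:C)%C + expi (- t).
Proof.
set u := N + cos t. set x := sin t / u.
have hu : 0 < u by rewrite /u; have := cos_geN1 t; lra.
have hs : sin t = x * u by rewrite /x mulrVK // unitfE gt_eqF.
set A := atan x.
have hc : cos A != 0.
  by rewrite /A cos_atan invr_eq0 gt_eqF // sqrtr_gt0; have := sqr_ge0 x; lra.
have hsA : sin A = x * cos A.
  by have := atanK x; rewrite -/A /tan => <-; rewrite mulrVK // unitfE.
have h1 := cos2Dsin2 A. rewrite hsA in h1.
have h2 : cos A ^+ 2 * (1 + x ^+ 2) = 1 by rewrite -[X in _ = X]h1; ring.
rewrite /expi cosN sinN.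
have -> : 2 * A = A + A by ring.
rewrite cosD sinD hsA.
apply/eqP; rewrite eq_complex /=; apply/andP; split; apply/eqP.
all: rewrite ?cosN ?sinN -/u hs.
- transitivity (u * (cos A ^+ 2 * (1 + x ^+ 2))); first ring.
  by rewrite h2 mulr1 ?add0r.
- transitivity (- (x * u) * (cos A ^+ 2 * (1 + x ^+ 2))); first ring.
  by rewrite h2 mulr1 ?add0r.
Qed.
End S.

Lemma F2_cases (x : 'F_2) : x = 0 \/ x = 1.
Proof. case: x => [[|[|k]] hk]; [left|right|]; try by apply/eqP. by []. Qed.
Lemma F2_11 : (1 + 1 : 'F_2) = 0. Proof. by apply/eqP. Qed.
Lemma F2_xx (x : 'F_2) : x + x = 0.
Proof. by case: (F2_cases x) => ->; rewrite ?addr0 ?F2_11. Qed.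
Lemma F2_10 : (1 : 'F_2) != 0. Proof. by []. Qed.

Definition fB (m : nat) (a : nat -> 'F_2) (j : nat) : 'F_2 :=
  \sum_(i < m) a i * (odd (j %/ 2 ^ i))%:R.

Lemma fB_small m a j : (j < 2 ^ m)%N -> fB m.+1 a j = fB m a j.
Proof. move=> hj; by rewrite /fB big_ord_recr /= divn_small // mulr0 addr0. Qed.

Lemma fB_big m a j : (j < 2 ^ m)%N -> fB m.+1 a (j + 2 ^ m) = fB m a j + a m.
Proof.
move=> hj; rewrite /fB big_ord_recr /=.
rewrite divnDr ?dvdnn // divnn expn_gt0 /= divn_small // add0n /= mulr1.
congr (_ + _); apply: eq_bigr => i _.
have hi : (i <= m)%N by apply: ltnW.
rewrite divnDr; last by rewrite dvdn_exp2l.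
have -> : (2 ^ m = 2 ^ (m - i) * 2 ^ i)%N by rewrite -expnD subnK.
rewrite oddD mulnK ?expn_gt0 // oddX /=.
by rewrite subn_eq0 leqNgt ltn_ord /= addbF.
Qed.

Lemma F2_count (x : 'F_2) : addn (x + 1 == 1) (x == 1) = 1%N.
Proof. by case: (F2_cases x) => ->; rewrite ?add0r ?F2_11. Qed.

Lemma count_fB m a : (exists2 i, (i < m)%N & a i = 1) ->
  \big[addn/0%N]_(0 <= j < 2 ^ m) nat_of_bool (fB m a j == 1) = (2 ^ m.-1)%N.
Proof.
elim: m => [|m IH] [i hi hai]; first by [].
rewrite expnS mul2n -addnn (@big_cat_nat _ _ _ (2 ^ m)%N) ?leq_addr //=.
rewrite -{2}(add0n (2 ^ m)%N) big_addn addnK.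
rewrite (@eq_big_nat _ _ _ _ _ _ (fun j => nat_of_bool (fB m a j == 1))); last first.
  by move=> j /andP [_ hj]; rewrite fB_small.
rewrite (@eq_big_nat _ _ _ 0 (2^m)%N (fun j => nat_of_bool (fB m.+1 a (j + 2 ^ m)%N == 1)) (fun j => nat_of_bool (fB m a j + a m == 1))); last first.
  by move=> j /andP [_ hj]; rewrite fB_big.
case: (F2_cases (a m)) => ham.
- have him : (i < m)%N.
    by move: hi; rewrite ltnS leq_eqVlt => /orP [/eqP hh|//]; move: hai; rewrite hh ham => /eqP; rewrite eq_sym (negbTE F2_10).
  rewrite IH; last by exists i.
  rewrite (@eq_big_nat _ _ _ 0 (2^m)%N _ (fun j => nat_of_bool (fB m a j == 1))); last by move=> j _; rewrite ham addr0.
  rewrite IH; last by exists i.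
  by rewrite addnn -mul2n -expnS prednK // (leq_ltn_trans _ him).
- rewrite ham -big_split /=.
  rewrite (@eq_big_nat _ _ _ 0 (2^m)%N _ (fun _ => 1%N)); last by move=> j _; rewrite addnC F2_count.
  by rewrite big_const_nat subn0 iter_addn_0 mul1n.
Qed.

Definition wt n (w : 'rV['F_2]_n) : nat := \big[addn/0%N]_(k < n) nat_of_bool (w 0 k == 1).
Arguments wt {n} w.

Lemma RMbar_elem m y : y \in RMbar m ->
  exists a : 'rV['F_2]_m, y = \row_k (\sum_(i < m) a 0 i * bit_of (succ_ord k) i).
Proof.
case/imsetP => c; rewrite inE => /andP [/imset2P [a0 a _ _ ->] h0] ->.
move: h0; rewrite mxE.
have -> : \sum_(i < m) a 0 i * bit_of (ord_zero m) i = 0.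
  by apply: big1 => i _; rewrite /bit_of /= div0n /= mulr0.
rewrite addr0 => /eqP ->; exists a.
by apply/matrixP => i j; rewrite !mxE add0r.
Qed.

Lemma sum_shift m (F : nat -> nat) : F 0%N = 0%N ->
  \big[addn/0%N]_(k < nq m) F k.+1 = \big[addn/0%N]_(0 <= j < 2 ^ m) F j.
Proof.
move=> h0; have h2 : (0 < 2 ^ m)%N by rewrite expn_gt0.
rewrite -(prednK h2) big_nat_recl // h0 add0n big_mkord.
by [].
Qed.

Lemma wt_RMbar m y : y \in RMbar m -> y != 0 -> wt y = (2 ^ m.-1)%N.
Proof.
move=> /RMbar_elem [a ->] hy.
pose a' (i : nat) : 'F_2 := oapp (fun i' : 'I_m => a 0 i') 0 (insub i).
have he : forall k : 'I_(nq m), (\sum_(i < m) a 0 i * bit_of (succ_ord k) i) = fB m a' k.+1.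
  move=> k; rewrite /fB; apply: eq_bigr => i _.
  by rewrite /a' valK /=.
rewrite /wt (eq_bigr (fun k : 'I_(nq m) => nat_of_bool (fB m a' k.+1 == 1))); last first.
  by move=> k _; rewrite mxE he.
rewrite (@sum_shift m (fun j => nat_of_bool (fB m a' j == 1))); last first.
  by rewrite /fB big1 // => i _; rewrite div0n /= mulr0.
apply: count_fB.
have : exists i : 'I_m, a 0 i != 0.
  apply/existsP; apply: contraR hy => /existsP hn.
  apply/eqP/matrixP => i j; rewrite !mxE; apply: big1 => l _.
  have : ~~ (a 0 l != 0) by apply/negP => hl; apply: hn; exists l.
  by rewrite negbK => /eqP ->; rewrite mul0r.
case=> i hi; exists i => //.
rewrite /a' valK /=; by case: (F2_cases (a 0 i)) hi => -> //; rewrite eqxx.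
Qed.

Lemma wt_add1 n (y : 'rV['F_2]_n) : addn (wt (y + const_mx 1)) (wt y) = n.
Proof.
rewrite /wt -big_split /=.
rewrite (eq_bigr (fun _ => 1%N)); last by move=> k _; rewrite !mxE F2_count.
by rewrite sum1_card card_ord.
Qed.

Lemma wt0 n : wt (0 : 'rV['F_2]_n) = 0%N.
Proof. by rewrite /wt big1 // => k _; rewrite mxE. Qed.

Lemma two_neq0 (R : rcfType) : (2%:R : R[i]) != 0.
Proof. by rewrite pnatr_eq0. Qed.

Lemma Zfold_id (R : rcfType) n r (H : 'M['F_2]_(r,n)) (s : seq 'I_r) (acc : qstate R n) :
  (forall z, acc z != 0 -> H *m z^T == 0) ->
  foldr (fun i acc => halfop (Zop (row i H)) acc) acc s = acc.
Proof.
move=> hacc; elim: s => [//|i s IH] /=; rewrite IH.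
apply: funext => z; rewrite /halfop /Zop.
have [->|hz] := eqVneq (acc z) 0; first by rewrite mulr0 addr0 mul0r.
have := hacc z hz => /eqP hH.
rewrite -row_mul hH !mxE.
rewrite eqxx mul1r -mulr2n -[acc z *+ 2]mulr_natr mulfK //.
Qed.

Definition Sset k (s : seq 'I_k) (a : 'rV['F_2]_k) : bool :=
  [forall j, (a 0 j != 0) ==> (j \in s)].
Arguments Sset {k} s a.

Lemma Xfold_eq (R : rcfType) n k (g : 'M['F_2]_(k,n)) (s : seq 'I_k) (psi : qstate R n) :
  uniq s -> forall z,
  foldr (fun i acc => halfop (Xop (row i g)) acc) psi s z =
  (2 ^ size s)%:R^-1 * \sum_(a : 'rV['F_2]_k | Sset s a) psi (z + a *m g).
Proof.
elim: s => [_|i s IH /andP [his us]] z /=.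
  rewrite expn0 invr1 mul1r (big_pred1 0) ?mul0mx ?addr0 // => a.
  rewrite /Sset; apply/forallP/eqP => [h|-> j]; last by rewrite mxE.
  apply/matrixP => x j; rewrite ord1 mxE; move: (h j).
  by case: eqP.
rewrite /halfop /Xop !IH //.
set e : 'rV['F_2]_k := delta_mx 0 i.
have E1 : \sum_(a | Sset (i :: s) a && (a 0 i == 0)) psi (z + a *m g) = \sum_(a | Sset s a) psi (z + a *m g).
  apply: eq_bigl => a; rewrite /Sset; apply/idP/idP.
  - case/andP => /forallP h /eqP hi; apply/forallP => j; apply/implyP => hj.
    move: (h j); rewrite hj /= inE => /orP [/eqP hji|//].
    by move: hj; rewrite hji hi eqxx.
  - move=> /forallP h; apply/andP; split.
      apply/forallP => j; apply/implyP => hj; rewrite inE.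
      by move: (h j); rewrite hj /= => ->; rewrite orbT.
    by apply/negPn/negP => hi; move: (h i); rewrite hi /= (negbTE his).
have E2 : \sum_(a | Sset (i :: s) a && (a 0 i != 0)) psi (z + a *m g) = \sum_(a | Sset s a) psi (z + row i g + a *m g).
  rewrite (reindex_inj (addIr e)) /=.
  apply: eq_big => b; last first.
    by move=> _; rewrite mulmxDl /e -rowE addrA [z + _ + _]addrAC.
  rewrite /Sset /e; apply/idP/idP.
  - case/andP => /forallP h; rewrite !mxE eqxx /= => hi.
    have hbi : b 0 i = 0 by case: (F2_cases (b 0 i)) hi => ->; rewrite ?F2_11 ?eqxx.
    apply/forallP => j; apply/implyP => hj.
    have hji : j != i by apply: contraNneq hj => ->; rewrite hbi.
    move: (h j); rewrite !mxE (negbTE hji) /= addr0 hj /= inE (negbTE hji) //.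
  - move=> /forallP h.
    have hbi : b 0 i = 0.
      by apply/eqP/negPn/negP => hi; move: (h i); rewrite hi /= (negbTE his).

    apply/andP; split; last first.
      by rewrite !mxE !eqxx hbi add0r oner_neq0.
    apply/forallP => j; apply/implyP; rewrite inE.
    have [->|hji] := eqVneq j i; first by [].
    rewrite !mxE /= (negbTE hji) /= addr0 => hj.
    by move: (h j); rewrite hj.
rewrite [in RHS](bigID (fun a : 'rV_k => a 0 i == 0)) /= E1 E2.
rewrite expnS natrM invfM.
set c := (2 ^ size s)%:R^-1.
set X := \sum_(_ | _) _.
set Y := \sum_(_ | _) _.
rewrite mulrDl mulrDr; ring.
Qed.

Lemma vv n (v : 'rV['F_2]_n) : v + v = 0.
Proof. by apply/matrixP => i j; rewrite !mxE F2_xx. Qed.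

Lemma final_id (R : realType) (phi h N : R) (hN : N = 2 * h - 1) (h1 : 1 < N) :
  expi (N * (phi / 2) - N * phi) + ((N%:C)%C) * expi (N * (phi / 2) - (N - h) * phi) =
  expi (phi - 2 * atan (sin (h * phi) / (N + cos (h * phi)))) *
  (expi (N * (phi / 2) - 0 * phi) + ((N%:C)%C) * expi (N * (phi / 2) - h * phi)).
Proof.
set E := expi (N * (phi / 2)). set p := expi phi. set e := expi (- (h * phi)).
set q := expi (h * phi).
set K := expi (- (2 * atan (sin (h * phi) / (N + cos (h * phi))))).
have hK : K * ((N%:C)%C + q) = (N%:C)%C + e by apply: key_atan.
have heq : e * q = 1 by apply: expiNK.
have -> : expi (N * (phi / 2) - N * phi) = E * p * e * e.
  by rewrite -!expiD; congr expi; rewrite hN; ring.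
have -> : expi (N * (phi / 2) - (N - h) * phi) = E * p * e.
  by rewrite -!expiD; congr expi; rewrite hN; ring.
have -> : expi (N * (phi / 2) - 0 * phi) = E by rewrite mul0r subr0.
have -> : expi (N * (phi / 2) - h * phi) = E * e by rewrite -expiD.
have -> : expi (phi - 2 * atan (sin (h * phi) / (N + cos (h * phi)))) = p * K by rewrite -expiD.
have hE : E + (N%:C)%C * (E * e) = E * e * ((N%:C)%C + q).
  by transitivity (E * (e * q) + (N%:C)%C * (E * e)); [rewrite heq mulr1 | ring].
rewrite hE.
transitivity (p * E * e * (K * ((N%:C)%C + q))); first by rewrite hK; ring.
ring.
Qed.

Lemma S0_neq0 (R : realType) (phi h N : R) (h1 : 1 < N) :
  expi (N * (phi / 2) - 0 * phi) + ((N%:C)%C) * expi (N * (phi / 2) - h * phi) != 0.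
Proof.
set E := expi (N * (phi / 2)). set e := expi (- (h * phi)).
set q := expi (h * phi).
have heq : e * q = 1 by apply: expiNK.
have -> : expi (N * (phi / 2) - 0 * phi) = E by rewrite mul0r subr0.
have -> : expi (N * (phi / 2) - h * phi) = E * e by rewrite -expiD.
have -> : E + (N%:C)%C * (E * e) = E * e * ((N%:C)%C + q).
  by transitivity (E * (e * q) + (N%:C)%C * (E * e)); [rewrite heq mulr1 | ring].
rewrite !mulf_neq0 ?expi_neq0 //.
apply/eqP => h0; have := congr1 (@complex.Re R) h0; rewrite /q /expi /=.
have := cos_geN1 (h * phi); lra.
Qed.

Theorem lemma1 (R : realType) (m : nat) (hm : (3 <= m)%N) (phi : R)
  (hphi : exists b : nat -> bool,
     (fun N : nat => \sum_(k < N) (b k)%:R * (2 * pi / 2 ^+ k.+1)) @ \oo --> phi)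
  (g : 'M['F_2]_(m, nq m)) (hg : is_basis_of g (RMbar m))
  (H : 'M['F_2]_(2 ^ m - m - 2, nq m)) (hH : is_parity_check H (RMstar m))
  (alpha beta : R[i]) :
  let phim := 2 ^+ m.-1 * phi in
  let phi' := phi - 2 * atan (sin phim / ((2 ^ m - 1)%:R + cos phim)) in
  exists c : R[i], c != 0 /\
    codeproj g H (Rz_transversal (- phi)
                    (fun z => alpha * @ket0L R m z + beta * @ket1L R m z))
    = (fun z => c * (alpha * @ket0L R m z + expi phi' * beta * @ket1L R m z)).
Proof.
move=> phim phi'.
set n := nq m.
case: hg => gfree hCg; case: hH => _ hHC.
set C := RMbar m.
set one : 'rV['F_2]_n := const_mx 1.
have Cadd : forall v w, v \in C -> w \in C -> v + w \in C.
  by move=> v w; rewrite !hCg; apply: addmx_sub.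
have CMg : forall a : 'rV_m, a *m g \in C by move=> a; rewrite hCg submxMl.
have Cex : forall v, v \in C -> exists a, v = a *m g.
  by move=> v; rewrite hCg => /submxP [a ->]; exists a.
have Cshift : forall z y, y \in C -> (z + y \in C) = (z \in C).
  move=> z y hy; apply/idP/idP => hz; last exact: Cadd.
  suff : (z + y) + y \in C by rewrite -addrA vv addr0.
  exact: Cadd.
have hm0 : (0 < m)%N by lia.
have h2m : (2 ^ m = 2 * 2 ^ m.-1)%N by rewrite -expnS prednK.
have h8 : (2 ^ 3 <= 2 ^ m)%N by rewrite leq_exp2l.
have hn : n = (2 ^ m).-1 by [].
have wt_one : wt one = n.
  by have := @wt_add1 n 0; rewrite add0r wt0 addn0.
have one_notC : one \notin C.
  apply/negP => h1.
  have hone : one != 0.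
    by apply/eqP => h0; move: wt_one; rewrite h0 wt0 => hn0; move: hn0; rewrite hn; lia.
  have := @wt_RMbar m one h1 hone; rewrite wt_one hn; lia.
pose P (w : 'rV['F_2]_n) := \prod_(k < n) Rz1 (- phi) (w 0 k).
set N : R := n%:R.
set h : R := (2 ^ m.-1)%:R.
have hP : forall w, P w = expi (N * (phi / 2) - (wt w)%:R * phi).
  move=> w; rewrite /P.
  rewrite (eq_bigr (fun k => expi (phi / 2 - (nat_of_bool (w 0 k == 1))%:R * phi))); last first.
    move=> k _; rewrite /Rz1; case: (F2_cases (w 0 k)) => ->; rewrite ?eqxx /=;
      by congr expi; lra.
  rewrite prod_expi; congr expi.
  rewrite sumrB sumr_const card_ord /wt natr_sum -mulr_suml.
  by rewrite /N mulr_natl.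
set psi0 := Rz_transversal (- phi) (fun z => alpha * @ket0L R m z + beta * @ket1L R m z).
have hX : forall z, foldr (fun i acc => halfop (Xop (row i g)) acc) psi0 (enum 'I_m) z =
  (2 ^ m)%:R^-1 * (\sum_(a : 'rV['F_2]_m) P (z + a *m g)) * (alpha * @ket0L R m z + beta * @ket1L R m z).
  move=> z; rewrite Xfold_eq ?enum_uniq // size_enum_ord.
  rewrite (eq_bigl predT); last first.
    by move=> a; rewrite /Sset; apply/forallP => j; rewrite mem_enum implybT.
  rewrite -mulrA mulr_suml; congr (_ * _); apply: eq_bigr => a _.
  rewrite /psi0 /Rz_transversal /ket0L /ket1L -/C Cshift // [z + _ + _]addrAC Cshift //.
set S0 := \sum_(a : 'rV['F_2]_m) P (a *m g).
set S1 := \sum_(a : 'rV['F_2]_m) P (a *m g + one).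
have hS0C : forall z, z \in C -> \sum_(a : 'rV['F_2]_m) P (z + a *m g) = S0.
  move=> z /Cex [b ->]; rewrite /S0 [in RHS](reindex_inj (addrI b)) /=.
  by apply: eq_bigr => a _; rewrite mulmxDl.
have hS1C : forall z, z + one \in C -> \sum_(a : 'rV['F_2]_m) P (z + a *m g) = S1.
  move=> z /Cex [b hb].
  have -> : z = b *m g + one by rewrite -hb -addrA vv addr0.
  rewrite /S1 [in RHS](reindex_inj (addrI b)) /=.
  by apply: eq_bigr => a _; rewrite mulmxDl addrAC.
set c := (2 ^ m)%:R^-1 * S0.
have hNc : (n%:R : R[i]) = (N%:C)%C by rewrite rmorph_nat.
have hcard : #|predC1 (0 : 'rV['F_2]_m)| = n by rewrite cardC1 card_mx card_Fp // mul1n.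
have agnz : forall a : 'rV['F_2]_m, a != 0 -> a *m g != 0.
  move=> a ha; apply: contra ha => /eqP h0; apply/eqP; apply: (row_free_inj gfree).
  by rewrite h0 mul0mx.
have eS0 : S0 = expi (N * (phi / 2) - 0 * phi) + (N%:C)%C * expi (N * (phi / 2) - h * phi).
  rewrite /S0 (bigD1 0) //= mul0mx hP wt0.
  rewrite (eq_bigr (fun _ => expi (N * (phi / 2) - h * phi))); last first.
    by move=> a ha; rewrite hP (@wt_RMbar m _ (CMg a) (agnz a ha)).
  by rewrite sumr_const hcard -[_ *+ n]mulr_natl hNc.
have eS1 : S1 = expi (N * (phi / 2) - N * phi) + (N%:C)%C * expi (N * (phi / 2) - (N - h) * phi).
  rewrite /S1 (bigD1 0) //= mul0mx add0r hP wt_one.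
  rewrite (eq_bigr (fun _ => expi (N * (phi / 2) - (N - h) * phi))); last first.
    move=> a ha; rewrite hP; congr expi; congr (_ - _ * _).
    have := @wt_add1 n (a *m g); rewrite (@wt_RMbar m _ (CMg a) (agnz a ha)) => e.
    by rewrite /N /h -(congr1 (fun k => k%:R : R) e) natrD addrK.
  by rewrite sumr_const hcard -/N -[_ *+ n]mulr_natl hNc.
have hNh : N = 2 * h - 1.
  have e : (n + 1 = 2 * 2 ^ m.-1)%N by rewrite -h2m hn; lia.
  move/(congr1 (fun k => k%:R : R)): e; rewrite natrD natrM /N /h => e; lra.
have h1N : 1 < N by rewrite /N ltr1n hn; lia.
have hphim : phim = h * phi by rewrite /phim /h natrX.
have hN' : ((2 ^ m - 1)%:R : R) = N by rewrite subn1.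
have hS : S1 = expi phi' * S0.
  rewrite eS0 eS1 /phi' hphim hN'; exact: final_id.
have hS0 : S0 != 0 by rewrite eS0; exact: S0_neq0.
have hF : forall z, foldr (fun i acc => halfop (Xop (row i g)) acc) psi0 (enum 'I_m) z =
    c * (alpha * @ket0L R m z + expi phi' * beta * @ket1L R m z).
  move=> z; rewrite hX /ket0L /ket1L -/C.
  have [hz|hz] := boolP (z \in C).
    have hz1 : (z + one \in C) = false.
      apply/negbTE; apply: contra one_notC => h1.
      by have := Cadd _ _ hz h1; rewrite addrA vv add0r.
    by rewrite -/one hz1 (hS0C z hz) /c; ring.
  have [hz1|hz1] := boolP (z + one \in C).
    by rewrite -/one ?(negbTE hz) ?hz1 (hS1C z hz1) hS /c; ring.
  by rewrite -/one ?(negbTE hz) ?(negbTE hz1); ring.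
have eX := funext hF.
exists c; split.
  by rewrite /c mulf_neq0 // invr_eq0 pnatr_eq0 expn_eq0.
rewrite /codeproj -/psi0 eX Zfold_id //.
move=> z /= hz; rewrite -hHC.
have [h0|h0] := boolP (z \in C).
  by apply/imset2P; exists z 0 => //; rewrite scale0r addr0.
have [h1|h1] := boolP (z + one \in C).
  by apply/imset2P; exists (z + one) 1 => //; rewrite scale1r -addrA vv addr0.
by move: hz; rewrite /ket0L /ket1L -/C (negbTE h0) (negbTE h1) !mulr0 addr0 mulr0 eqxx.
Qed.
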